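(* Let $(X,G)$ be a $G$-system with metric $d$ of diameter $\rho$, and let $\zeta\in\mathcal A[0,\rho]$ satisfy $k(\zeta):=k_m(\zeta)=k_M(\zeta)>0$. With $\zeta_d(x,y)=\zeta(d(x,y))$, $$\overline{\mathrm{mdim}}_{\mathrm M}(X,G,d)=k(\zeta)\,\overline{\mathrm{mdim}}_{\mathrm M}(X,G,\zeta_d),\qquad\underline{\mathrm{mdim}}_{\mathrm M}(X,G,d)=k(\zeta)\,\underline{\mathrm{mdim}}_{\mathrm M}(X,G,\zeta_d).$$
   Context: $G$ is a countable discrete amenable group; a $G$-system is a compact metric space with a continuous $G$-action. $\mathcal A[0,\rho]$ is the set of continuous, increasing, subadditive functions $\zeta:[0,\rho]\to[0,\infty)$ with $\zeta^{-1}(0)=\{0\}$; $k_m(\zeta)=\liminf_{\varepsilon\to0^+}\frac{\log\zeta(\varepsilon)}{\log\varepsilon}$, $k_M(\zeta)=\limsup_{\varepsilon\to0^+}\frac{\log\zeta(\varepsilon)}{\log\varepsilon}$. For a Følner sequence $(F_n)$ and metric $\rho'$, $\rho'_F(x,y)=\max_{g\in F}\rho'(gx,gy)$, $s_F(\rho',\varepsilon,X)$ is the maximal cardinality of a subset whose distinct points have $\rho'_F$-distance $>\varepsilon$; $\overline{\mathrm{mdim}}_{\mathrm M}(X,G,\rho')=\limsup_{\varepsilon\to0}\frac1{|\log\varepsilon|}\limsup_n\frac1{|F_n|}\log s_{F_n}(\rho',\varepsilon,X)$ and $\underline{\mathrm{mdim}}_{\mathrm M}$ the same with $\liminf_{\varepsilon\to0}$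 (equivalently with minimal spanning-set cardinalities; independent of the Følner sequence). *)

(* Defs.v *)
From HB Require Import structures.
From mathcomp Require Import all_boot all_order all_algebra.
From mathcomp Require Import monoid.
From mathcomp Require Import all_classical all_reals all_analysis.

Set Implicit Arguments.
Unset Strict Implicit.
Unset Printing Implicit Defensive.

Import Order.TTheory GRing.Theory Num.Theory.
Import numFieldNormedType.Exports.

Local Open Scope classical_set_scope.
Local Open Scope ring_scope.

Definition countable_group (G : groupType) : Prop :=
  exists f : G -> nat, injective f.

(* Cardinality of the symmetric difference  gF Δ F  for a finite set F
   given as a duplicate-free list (left translation by g).            *)
Definition symdiff_card (G : groupType) (g : G) (F : seq G) : nat :=
  (size [seq x <- map (monoid.mul g) F | x \notin F]
   + size [seq x <- F | x \notin map (monoid.mul g) F])%N.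

Definition folner (R : realType) (G : groupType) (F : nat -> seq G) : Prop :=
  (forall n, uniq (F n) /\ (0 < size (F n))%N) /\
  forall g : G,
    (fun n => ((symdiff_card g (F n))%:R / (size (F n))%:R : R)) @ \oo --> (0 : R).

Definition continuous_action (G : groupType) (X : topologicalType)
    (act : G -> X -> X) : Prop :=
  [/\ forall g, continuous (act g),
      forall x, act (monoid.one : G) x = x &
      forall g h x, act (monoid.mul g h) x = act g (act h x)].

Definition metric_inducing (R : realType) (X : topologicalType)
    (d : X -> X -> R) : Prop :=
  [/\ forall x y, 0 <= d x y,
      forall x y, d x y = 0 <-> x = y,
      forall x y, d x y = d y x,
      forall x y z, d x z <= d x y + d y z &
      forall (x : X) (A : set X),
        nbhs x A <-> exists2 e : R, 0 < e & [set y | d x y < e] `<=` A].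

Definition diameter (R : realType) (X : Type) (d : X -> X -> R) : R :=
  sup [set r | exists x y, r = d x y].

Definition classA (R : realType) (rho : R) (zeta : R -> R) : Prop :=
  [/\ {within `[0, rho], continuous zeta},
      (forall s t, s \in `[0, rho] -> t \in `[0, rho] -> s <= t ->
         zeta s <= zeta t),
      (forall s t, 0 <= s -> 0 <= t -> s + t <= rho ->
         zeta (s + t) <= zeta s + zeta t),
      (forall t, t \in `[0, rho] -> 0 <= zeta t) &
      (forall t, t \in `[0, rho] -> (zeta t = 0 <-> t = 0))].

Local Open Scope ereal_scope.

Definition k_m (R : realType) (zeta : R -> R) : \bar R :=
  limf_einf (fun e : R => (ln (zeta e) / ln e)%:E) (0%R)^'+.
Definition k_M (R : realType) (zeta : R -> R) : \bar R :=
  limf_esup (fun e : R => (ln (zeta e) / ln e)%:E) (0%R)^'+.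

Local Close Scope ereal_scope.

Definition bowen (R : realType) (G : groupType) (X : Type) (act : G -> X -> X)
    (rho : X -> X -> R) (F : seq G) (x y : X) : R :=
  \big[Num.max/0]_(g <- F) rho (act g x) (act g y).

Definition separated (R : realType) (G : groupType) (X : choiceType)
    (act : G -> X -> X) (rho : X -> X -> R) (F : seq G) (e : R) (s : seq X) :=
  uniq s /\ forall x y, x \in s -> y \in s -> x != y -> e < bowen act rho F x y.

Definition sep_num (R : realType) (G : groupType) (X : choiceType)
    (act : G -> X -> X) (rho : X -> X -> R) (F : seq G) (e : R) : R :=
  sup [set (size s)%:R | s in [set s : seq X | separated act rho F e s]].

Definition mdim_level (R : realType) (G : groupType) (X : choiceType)
    (act : G -> X -> X) (F : nat -> seq G) (rho : X -> X -> R) (e : R) : \bar R :=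
  limn_esup (fun n => (ln (sep_num act rho (F n) e) / (size (F n))%:R)%:E).

Local Open Scope ereal_scope.

Definition mdimM_upper (R : realType) (G : groupType) (X : choiceType)
    (act : G -> X -> X) (F : nat -> seq G) (rho : X -> X -> R) : \bar R :=
  limf_esup (fun e : R => ((`|ln e|)^-1)%:E * mdim_level act F rho e) (0%R)^'+.

Definition mdimM_lower (R : realType) (G : groupType) (X : choiceType)
    (act : G -> X -> X) (F : nat -> seq G) (rho : X -> X -> R) : \bar R :=
  limf_einf (fun e : R => ((`|ln e|)^-1)%:E * mdim_level act F rho e) (0%R)^'+.

(* Main.v *)
Require Import Defs.
From HB Require Import structures.
From mathcomp Require Import all_boot all_order all_algebra.
From mathcomp Require Import monoid.
From mathcomp Require Import all_classical all_reals all_analysis.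
From mathcomp Require Import ring lra.

Import Order.TTheory GRing.Theory Num.Theory.
Import numFieldNormedType.Exports.
Set Implicit Arguments.
Local Open Scope classical_set_scope.
Local Open Scope ring_scope.
Lemma bowen_nil (R : realType) (G : groupType) (X : Type) (act : G -> X -> X)
  (rho : X -> X -> R) x y : bowen act rho [::] x y = 0.
Proof. by rewrite /bowen big_nil. Qed.

Lemma bowen_cons (R : realType) (G : groupType) (X : Type) (act : G -> X -> X)
  (rho : X -> X -> R) g F x y :
  bowen act rho (g :: F) x y = Num.max (rho (act g x) (act g y)) (bowen act rho F x y).
Proof. by rewrite /bowen big_cons. Qed.

Lemma bowen_ge0 (R : realType) (G : groupType) (X : Type) (act : G -> X -> X)
  (rho : X -> X -> R) F x y : 0 <= bowen act rho F x y.
Proof.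
elim: F => [|g F IH]; first by rewrite bowen_nil.
by rewrite bowen_cons le_max IH orbT.
Qed.

Lemma bowen_lt (R : realType) (G : groupType) (X : Type) (act : G -> X -> X)
  (rho : X -> X -> R) F x y e : 0 < e ->
  (forall g, g \in F -> rho (act g x) (act g y) < e) -> bowen act rho F x y < e.
Proof.
move=> e0; elim: F => [|g F IH] H; first by rewrite bowen_nil.
rewrite bowen_cons gt_max H ?mem_head // IH // => h hF.
by apply: H; rewrite in_cons hF orbT.
Qed.

Lemma bowen_sym (R : realType) (G : groupType) (X : Type) (act : G -> X -> X)
  (rho : X -> X -> R) F x y : (forall a b, rho a b = rho b a) ->
  bowen act rho F x y = bowen act rho F y x.
Proof.
move=> s; elim: F => [|g F IH]; first by rewrite !bowen_nil.
by rewrite !bowen_cons IH s.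
Qed.

Lemma bowen_tri (R : realType) (G : groupType) (X : Type) (act : G -> X -> X)
  (rho : X -> X -> R) F x y z : (forall a b, 0 <= rho a b) ->
  (forall a b c, rho a c <= rho a b + rho b c) ->
  bowen act rho F x z <= bowen act rho F x y + bowen act rho F y z.
Proof.
move=> p t; elim: F => [|g F IH]; first by rewrite !bowen_nil addr0.
rewrite !bowen_cons ge_max; apply/andP; split.
  apply: (le_trans (t _ (act g y) _)); apply: lerD; by rewrite le_max lexx.
apply: (le_trans IH); apply: lerD; by rewrite le_max lexx orbT.
Qed.
Lemma bowen_near (R : realType) (G : groupType) (X : topologicalType)
  (act : G -> X -> X) (d : X -> X -> R) F e x :
  continuous_action act -> metric_inducing d -> 0 < e ->
  \forall y \near x, bowen act d F x y < e.
Proof.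
move=> [hc _ _] [_ _ _ _ hn] e0.
suff : \forall y \near x, forall g, g \in F -> d (act g x) (act g y) < e.
  by apply: filterS => y H; exact: bowen_lt.
elim: F => [|g F IH]; first by near=> y => g; rewrite in_nil.
have H1 : \forall y \near x, d (act g x) (act g y) < e.
  have N : nbhs (act g x) [set z | d (act g x) z < e].
    by apply/hn; exists e.
  exact: (hc g x _ N).
near=> y => h; rewrite in_cons => /orP [/eqP -> | hF].
  exact: (near H1 y).
exact: (near IH y).
Unshelve. all: end_near.
Qed.

Definition fin_filter (X : eqType) : set_system (seq X) :=
  fun Q => exists A : seq X, forall s, (forall z, z \in A -> z \in s) -> Q s.

Lemma fin_filter_filter (X : eqType) : Filter (@fin_filter X).
Proof.
split.
- by exists [::].
- move=> P Q [A HA] [B HB]; exists (A ++ B) => s Hs; split.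
    by apply: HA => z zA; apply: Hs; rewrite mem_cat zA.
  by apply: HB => z zB; apply: Hs; rewrite mem_cat zB orbT.
- by move=> P Q PQ [A HA]; exists A => s Hs; apply: PQ; apply: HA.
Qed.

Lemma bowen_cover (R : realType) (G : groupType) (X : topologicalType)
  (act : G -> X -> X) (d : X -> X -> R) F e :
  continuous_action act -> compact [set: X] -> metric_inducing d -> 0 < e ->
  exists C : seq X, forall y, exists2 c, c \in C & bowen act d F c y < e.
Proof.
move=> ha hk hm e0.
have := (proj1 (compact_near_coveringP _) hk) (seq X) (@fin_filter X)
  (fun s y => exists2 c, c \in s & bowen act d F c y < e) (@fin_filter_filter X).
case.
  move=> x _; exists ([set y | bowen act d F x y < e], [set s : seq X | x \in s]).
    split; first exact: bowen_near.
    by exists [:: x] => s Hs; apply: Hs; rewrite mem_head.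
  by move=> [y s] [/= Hy Hs]; exists x.
move=> A HA; exists A => y.
by have := HA A (fun z h => h) y I.
Qed.
Lemma bigmax_ge (R : realType) (T : eqType) (s : seq T) (f : T -> R) x :
  x \in s -> f x <= \big[Num.max/0]_(y <- s) f y.
Proof.
elim: s => [|a s IH]; first by rewrite in_nil.
rewrite in_cons big_cons => /orP [/eqP -> | xs]; first by rewrite le_max lexx.
by rewrite le_max IH ?orbT.
Qed.

Lemma sep_bound (R : realType) (G : groupType) (X : topologicalType)
  (act : G -> X -> X) (d : X -> X -> R) F e :
  continuous_action act -> compact [set: X] -> metric_inducing d -> 0 < e ->
  exists N : nat, forall s, Defs.separated act d F e s -> (size s <= N)%N.
Proof.
move=> ha hk hm e0.
have [C HC] := @bowen_cover _ _ _ act d F _ ha hk hm (divr_gt0 e0 (ltr0n _ 2)).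
have [f Hf] := @choice X X (fun y c => c \in C /\ bowen act d F c y < e / 2)
  (fun y => let: ex_intro2 c h1 h2 := HC y in ex_intro _ c (conj h1 h2)).
exists (size C) => s [us sep].
rewrite -(size_map f s); refine (@uniq_leq_size (X : eqType) (map f s) C _ _).
  rewrite (map_inj_in_uniq (f := f)) // => y1 y2 h1 h2 Heq.
  apply/eqP; apply: contraT => neq; have := sep _ _ h1 h2 neq.
  case: hm => hp _ hs ht _.
  have := @bowen_tri _ _ _ act d F y1 (f y1) y2 hp ht.
  rewrite (@bowen_sym _ _ _ act d F y1 (f y1) hs) Heq.
  have [_ h1'] := Hf y1; have [_ h2'] := Hf y2; rewrite Heq in h1'.
  move=> Htr Hlt; have : bowen act d F y1 y2 < e.
    by apply: (le_lt_trans Htr); apply: (lt_le_trans (ltrD h1' h2')); rewrite -splitr.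
  by rewrite ltNge (ltW Hlt).
by move=> z /mapP [y _ ->]; have [] := Hf y.
Qed.

Lemma d_bounded (R : realType) (G : groupType) (X : topologicalType)
  (act : G -> X -> X) (d : X -> X -> R) :
  continuous_action act -> compact [set: X] -> metric_inducing d ->
  exists M, forall x y, d x y <= M.
Proof.
move=> ha hk hm.
have [C HC] := @bowen_cover _ _ _ act d [:: (monoid.one : G)] _ ha hk hm ltr01.
have ha1 := ha; case: ha1 => _ h1 _.
case: hm => hp _ hs ht _.
have bE : forall a b, bowen act d [:: monoid.one] a b = d a b.
  move=> a b; rewrite bowen_cons bowen_nil !h1.
  by apply/max_idPl; apply: hp.
exists (1 + \big[Num.max/0]_(a <- C) \big[Num.max/0]_(b <- C) d a b + 1).
move=> x y.
have [c1 c1C H1] := HC x; have [c2 c2C H2] := HC y.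
rewrite bE in H1; rewrite bE in H2.
have e3 : d c1 c2 <= \big[Num.max/0]_(a <- C) \big[Num.max/0]_(b <- C) d a b.
  apply: (le_trans _ (@bigmax_ge _ _ C (fun a => \big[Num.max/0]_(b <- C) d a b) _ c1C)).
  exact: (@bigmax_ge _ _ C (fun b => d c1 b) _ c2C).
have t1 := ht x c1 y; have t2 := ht c1 c2 y; rewrite hs in H1.
move: e3 H1 H2 t1 t2.
set M0 := \big[Num.max/0]_(a <- C) _.
move=> *; lra.
Qed.
Section Esup.
Local Open Scope ereal_scope.

Lemma esup_le_near (R : realType) (T0 : choiceType) (T : filteredType T0) (F : set_system T) (FF : Filter F)
  (f g : T -> \bar R) :
  (\forall x \near F, f x <= g x) -> limf_esup f F <= limf_esup g F.
Proof.
move=> H; rewrite !limf_esupE; apply: le_ereal_inf_tmp => _ [V FV <-].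
have FW : F (V `&` [set x | f x <= g x]) by apply: filterI.
apply: (@le_trans _ _ (ereal_sup (f @` (V `&` [set x | f x <= g x])))).
  by apply: ereal_inf_lbound; exists (V `&` [set x | f x <= g x]).
apply: ge_ereal_sup => _ [x [Vx fg] <-].
apply: (le_trans fg); apply: ereal_sup_ubound; by exists x.
Qed.

Lemma esup_comp (R : realType) (T0 U0 : choiceType) (T : filteredType T0) (U : filteredType U0) (F : set_system T) (G : set_system U)
  (h : T -> U) (f : U -> \bar R) :
  (forall V, G V -> F (h @^-1` V)) -> limf_esup (f \o h) F <= limf_esup f G.
Proof.
move=> H; rewrite !limf_esupE; apply: le_ereal_inf_tmp => _ [V GV <-].
apply: (@le_trans _ _ (ereal_sup ((f \o h) @` (h @^-1` V)))).
  by apply: ereal_inf_lbound; exists (h @^-1` V) => //; apply: H.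
apply: ge_ereal_sup => _ [x Vx <-].
apply: ereal_sup_ubound; by exists (h x).
Qed.

Lemma esup_scale (R : realType) (T0 : choiceType) (T : filteredType T0) (F : set_system T)
  (f : T -> \bar R) (c : R) : (0 < c)%R ->
  limf_esup (fun x => c%:E * f x) F = c%:E * limf_esup f F.
Proof.
move=> c0; rewrite !limf_esupE -ereal_inf_pZl //; congr ereal_inf.
rewrite image_comp /=; apply: eq_imagel => V FV /=.
by rewrite -ereal_sup_pZl // image_comp.
Qed.

Lemma einf_le_near (R : realType) (T0 : choiceType) (T : filteredType T0) (F : set_system T) (FF : Filter F)
  (f g : T -> \bar R) :
  (\forall x \near F, f x <= g x) -> limf_einf f F <= limf_einf g F.
Proof.
move=> H; rewrite /limf_einf leeN2; apply: esup_le_near.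
by apply: filterS H => x; rewrite /= leeN2.
Qed.

Lemma einf_comp (R : realType) (T0 U0 : choiceType) (T : filteredType T0) (U : filteredType U0) (F : set_system T) (G : set_system U)
  (h : T -> U) (f : U -> \bar R) :
  (forall V, G V -> F (h @^-1` V)) -> limf_einf f G <= limf_einf (f \o h) F.
Proof.
move=> H; rewrite /limf_einf leeN2.
exact: (@esup_comp R _ _ T U F G h (\- f) H).
Qed.

Lemma einf_scale (R : realType) (T0 : choiceType) (T : filteredType T0) (F : set_system T)
  (f : T -> \bar R) (c : R) : (0 < c)%R ->
  limf_einf (fun x => c%:E * f x) F = c%:E * limf_einf f F.
Proof.
move=> c0; rewrite /limf_einf muleN -esup_scale //; congr (- _).
by congr limf_esup; apply: funext => x /=; rewrite muleN.
Qed.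

Lemma esup_cst0 (R : realType) (T0 : choiceType) (T : filteredType T0) (F : set_system T) (FF : ProperFilter F) :
  limf_esup (fun _ : T => 0 : \bar R) F = 0.
Proof.
apply/eqP; rewrite eq_le; apply/andP; split; last by apply: limf_esup_ge0 => //; exact: filter_not_empty.
rewrite limf_esupE; apply: ge_ereal_inf; exists (ereal_sup ((fun _ : T => 0 : \bar R) @` setT)).
  by exists setT => //; apply: filterT.
by apply: ge_ereal_sup => _ [x _ <-].
Qed.

Lemma einf_cst0 (R : realType) (T0 : choiceType) (T : filteredType T0) (F : set_system T) (FF : ProperFilter F) :
  limf_einf (fun _ : T => 0 : \bar R) F = 0.
Proof.
rewrite /limf_einf.
have -> : (\- (fun _ : T => 0 : \bar R)) = (fun _ => 0) by apply: funext => x; exact: oppe0.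
by rewrite esup_cst0 // oppe0.
Qed.

Lemma esup_lt_near (R : realType) (T0 : choiceType) (T : filteredType T0) (F : set_system T) (FF : Filter F)
  (f : T -> \bar R) a : limf_esup f F < a -> \forall x \near F, f x < a.
Proof.
rewrite limf_esupE => /ereal_inf_lt [_ [V FV <-] Hlt].
apply: filterS FV => x Vx; apply: le_lt_trans Hlt.
apply: ereal_sup_ubound; by exists x.
Qed.

Lemma einf_gt_near (R : realType) (T0 : choiceType) (T : filteredType T0) (F : set_system T) (FF : Filter F)
  (f : T -> \bar R) a : a < limf_einf f F -> \forall x \near F, a < f x.
Proof.
rewrite /limf_einf => H.
have : limf_esup (\- f) F < - a by rewrite -lteN2 oppeK.
move/esup_lt_near; apply: filterS => x /=; by rewrite lteN2.
Qed.

Lemma le_mul_lim (R : realType) (x L : \bar R) (c : R) : (0 < c)%R -> 0 <= L ->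
  (forall c', (c < c')%R -> x <= c'%:E * L) -> x <= c%:E * L.
Proof.
move=> c0; case: L => [l| |] //.
- rewrite lee_fin => l0 H; case: x H => [r| |] H; last by rewrite leNye.
  + rewrite -EFinM lee_fin; apply/ler_addgt0Pr => e e0.
    have := H (c + e / (l + 1))%R; rewrite -EFinM lee_fin => /(_ _) h.
    have l1 : (0 < l + 1)%R by lra.
    apply: (le_trans (h _)); first by rewrite ltrDl divr_gt0.
    rewrite mulrDl lerD2l.
    have ht : ((l + 1)^-1 * (l + 1) = 1)%R by rewrite mulVf // gt_eqF.
    have ht0 : (0 < (l + 1)^-1)%R by rewrite invr_gt0.
    move: ht ht0; set t := ((l + 1)^-1)%R => ht ht0; nra.
  + have h := H (c + 1)%R ltac:(by rewrite ltrDl).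
    by move: h; rewrite -EFinM leye_eq.
- by move=> _ _; rewrite muleC gt0_mulye ?lte_fin ?leey.
Qed.

End Esup.
Lemma sep_nil (R : realType) (G : groupType) (X : choiceType)
  (act : G -> X -> X) (rho : X -> X -> R) F e : Defs.separated act rho F e [::].
Proof. split; first done. move=> x y. rewrite in_nil. done. Qed.

Lemma sep_num_has_sup (R : realType) (G : groupType) (X : choiceType)
  (act : G -> X -> X) (rho : X -> X -> R) F e :
  (exists N : nat, forall s, Defs.separated act rho F e s -> (size s <= N)%N) ->
  has_sup [set ((size s)%:R : R) | s in [set s : seq X | Defs.separated act rho F e s]].
Proof.
move=> [N HN]; split.
  by exists (size (@nil X))%:R; exists [::] => //; exact: sep_nil.
by exists N%:R => _ [s Hs <-]; rewrite ler_nat; apply: HN.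
Qed.

Lemma sep_num_le (R : realType) (G : groupType) (X : choiceType)
  (act : G -> X -> X) (rho1 rho2 : X -> X -> R) F1 F2 e1 e2 :
  (exists N : nat, forall s, Defs.separated act rho2 F2 e2 s -> (size s <= N)%N) ->
  (forall s, Defs.separated act rho1 F1 e1 s -> Defs.separated act rho2 F2 e2 s) ->
  sep_num act rho1 F1 e1 <= sep_num act rho2 F2 e2.
Proof.
move=> HN Hs; rewrite /sep_num; apply: sup_le_ub.
  by exists (size (@nil X))%:R; exists [::] => //; exact: sep_nil.
move=> _ [s Hs1 <-]; apply: (sup_upper_bound (sep_num_has_sup HN)).
by exists s => //; apply: Hs.
Qed.

Lemma sep_num_ge1 (R : realType) (G : groupType) (X : choiceType)
  (act : G -> X -> X) (rho : X -> X -> R) F e (x : X) :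
  (exists N : nat, forall s, Defs.separated act rho F e s -> (size s <= N)%N) ->
  1 <= sep_num act rho F e.
Proof.
move=> HN; rewrite /sep_num.
apply: (sup_upper_bound (sep_num_has_sup HN)); exists [:: x] => //.
split => // a b; rewrite !inE => /eqP -> /eqP ->; by rewrite eqxx.
Qed.

Lemma ln_sep_sub (R : realType) (G : groupType) (X : choiceType)
  (act : G -> X -> X) (rho : X -> X -> R) F e :
  (forall x y : X, x = y) -> ln (sep_num act rho F e) = 0.
Proof.
move=> sub.
have HN : exists N : nat, forall s, Defs.separated act rho F e s -> (size s <= N)%N.
  exists 1%N => -[|a [|b t]] // [us _].
  by move: us; rewrite /= inE (sub a b) eqxx.
have [[x _]|nx] := pselect (exists x : X, True).
  suff -> : sep_num act rho F e = 1 by rewrite ln1.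
  apply/eqP; rewrite eq_le (sep_num_ge1 x HN) andbT.
  rewrite /sep_num; apply: sup_le_ub.
    by exists (size (@nil X))%:R; exists [::] => //; exact: sep_nil.
  move=> _ [[|a [|b t]] Hs <-] /=; [exact: ler01 | exact: lexx |].
  by case: Hs => us _; move: us; rewrite /= inE (sub a b) eqxx.
suff -> : sep_num act rho F e = 0 by rewrite ln0.
apply/eqP; rewrite eq_le; apply/andP; split.
  rewrite /sep_num; apply: sup_le_ub.
    by exists (size (@nil X))%:R; exists [::] => //; exact: sep_nil.
  move=> _ [[|a t] Hs <-] //; by exfalso; apply: nx; exists a.
rewrite /sep_num; apply: (sup_upper_bound (sep_num_has_sup HN)).
by exists [::] => //; exact: sep_nil.
Qed.
Lemma bowen_zeta_a (R : realType) (G : groupType) (X : Type) (act : G -> X -> X)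
  (d : X -> X -> R) (zeta : R -> R) (rho eps : R) F x y :
  (forall a b, 0 <= d a b <= rho) ->
  (forall s t, s \in `[0, rho] -> t \in `[0, rho] -> s <= t -> zeta s <= zeta t) ->
  0 <= eps <= rho -> 0 <= zeta eps ->
  zeta eps < bowen act (fun a b => zeta (d a b)) F x y -> eps < bowen act d F x y.
Proof.
move=> hd hz he hz0; elim: F => [|g F IH].
  by rewrite bowen_nil => /(le_lt_trans hz0); rewrite ltxx.
rewrite !bowen_cons !lt_max => /orP [H|H]; last by rewrite IH ?orbT.
apply/orP; left; rewrite ltNge; apply/negP => Hle.
have := hz _ _ (hd (act g x) (act g y)) he Hle.
by rewrite leNgt H.
Qed.

Lemma bowen_zeta_b (R : realType) (G : groupType) (X : Type) (act : G -> X -> X)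
  (d : X -> X -> R) (zeta : R -> R) (rho eps : R) F x y :
  (forall a b, 0 <= d a b <= rho) ->
  (forall s t, s \in `[0, rho] -> t \in `[0, rho] -> s <= t -> zeta s <= zeta t) ->
  0 <= eps <= rho -> 0 < zeta eps ->
  eps < bowen act d F x y -> zeta eps / 2 < bowen act (fun a b => zeta (d a b)) F x y.
Proof.
move=> hd hz he hz0; elim: F => [|g F IH].
  by rewrite bowen_nil => H; case/andP: he => e0 _; move: (le_lt_trans e0 H); rewrite ltxx.
rewrite !bowen_cons !lt_max => /orP [H|H]; last by rewrite IH ?orbT.
apply/orP; left.
have := hz _ _ he (hd (act g x) (act g y)) (ltW H).
move=> h; apply: lt_le_trans h; rewrite ltr_pdivrMr //; lra.
Qed.

Lemma sep_zeta_a (R : realType) (G : groupType) (X : choiceType) (act : G -> X -> X)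
  (d : X -> X -> R) (zeta : R -> R) (rho eps : R) F s :
  (forall a b, 0 <= d a b <= rho) ->
  (forall s t, s \in `[0, rho] -> t \in `[0, rho] -> s <= t -> zeta s <= zeta t) ->
  0 <= eps <= rho -> 0 <= zeta eps ->
  Defs.separated act (fun a b => zeta (d a b)) F (zeta eps) s ->
  Defs.separated act d F eps s.
Proof.
move=> hd hz he hz0 [us H]; split => // a b ha hb hab.
apply: (@bowen_zeta_a R G X act d zeta rho eps F a b hd hz he hz0); exact: H.
Qed.

Lemma sep_zeta_b (R : realType) (G : groupType) (X : choiceType) (act : G -> X -> X)
  (d : X -> X -> R) (zeta : R -> R) (rho eps : R) F s :
  (forall a b, 0 <= d a b <= rho) ->
  (forall s t, s \in `[0, rho] -> t \in `[0, rho] -> s <= t -> zeta s <= zeta t) ->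
  0 <= eps <= rho -> 0 < zeta eps ->
  Defs.separated act d F eps s ->
  Defs.separated act (fun a b => zeta (d a b)) F (zeta eps / 2) s.
Proof.
move=> hd hz he hz0 [us H]; split => // a b ha hb hab.
apply: (@bowen_zeta_b R G X act d zeta rho eps F a b hd hz he hz0); exact: H.
Qed.
Lemma near_rightP (R : realType) (P : R -> Prop) :
  (\forall e \near (0:R)^'+, P e) <-> exists2 t : R, 0 < t & forall e, 0 < e < t -> P e.
Proof.
split.
  move=> /nbhs_ballP [t t0 Ht]; exists t => // e /andP [e0 et].
  apply: Ht => //; rewrite /ball /= sub0r normrN gtr0_norm //.
move=> [t t0 Ht]; apply/nbhs_ballP; exists t => // e; rewrite /ball /= sub0r normrN.
move=> He e0; apply: Ht; rewrite e0 /=; move: He; rewrite gtr0_norm //.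
Qed.
Lemma level_le (R : realType) (G : groupType) (X : choiceType) (act : G -> X -> X)
  (F : nat -> seq G) (rho1 rho2 : X -> X -> R) e1 e2 (x : X) :
  (forall n, exists N : nat, forall s, Defs.separated act rho1 (F n) e1 s -> (size s <= N)%N) ->
  (forall n, exists N : nat, forall s, Defs.separated act rho2 (F n) e2 s -> (size s <= N)%N) ->
  (forall n s, Defs.separated act rho1 (F n) e1 s -> Defs.separated act rho2 (F n) e2 s) ->
  (mdim_level act F rho1 e1 <= mdim_level act F rho2 e2)%E.
Proof.
move=> h1 h2 h12; rewrite /mdim_level /limn_esup; apply: esup_le_near.
apply: nearW => n; rewrite lee_fin; apply: ler_wpM2r; first by rewrite invr_ge0.
have g1 := sep_num_ge1 x (h1 n); have g2 := sep_num_le (h2 n) (h12 n).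
rewrite ler_ln ?posrE //; [exact: lt_le_trans ltr01 g1 | ].
exact: lt_le_trans ltr01 (le_trans g1 g2).
Qed.

Lemma level_ge0 (R : realType) (G : groupType) (X : choiceType) (act : G -> X -> X)
  (F : nat -> seq G) (rho : X -> X -> R) e (x : X) :
  (forall n, exists N : nat, forall s, Defs.separated act rho (F n) e s -> (size s <= N)%N) ->
  (0 <= mdim_level act F rho e)%E.
Proof.
move=> h; rewrite /mdim_level /limn_esup; apply: limf_esup_ge0.
  exact: filter_not_empty.
move=> n; rewrite lee_fin divr_ge0 // ln_ge0 //; exact: sep_num_ge1 x (h n).
Qed.

Lemma level_sub (R : realType) (G : groupType) (X : choiceType) (act : G -> X -> X)
  (F : nat -> seq G) (rho : X -> X -> R) e :
  (forall x y : X, x = y) -> mdim_level act F rho e = 0%E.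
Proof.
move=> sub; rewrite /mdim_level /limn_esup.
have -> : (fun n => ((ln (sep_num act rho (F n) e)) / (size (F n))%:R)%:E) = (fun _ => 0%E).
  by apply: funext => n; rewrite ln_sep_sub // mul0r.
exact: esup_cst0.
Qed.
Lemma chain_le (R : realType) (r1 r2 c : R) (U V : \bar R) :
  0 < r1 -> 0 < r2 -> (U <= V)%E -> (0 <= V)%E -> r2 / r1 <= c ->
  ((r1^-1)%:E * U <= c%:E * ((r2^-1)%:E * V))%E.
Proof.
move=> r10 r20 UV V0 rc.
apply: (@le_trans _ _ ((r1^-1)%:E * V)%E).
  by apply: lee_wpmul2l => //; rewrite lee_fin invr_ge0 ltW.
have -> : ((r1^-1)%:E * V = (r2 / r1)%:E * ((r2^-1)%:E * V))%E.
  rewrite muleA -EFinM; congr (_ * _)%E; congr EFin.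
  by rewrite mulrC mulrA mulVf ?mul1r // gt_eqF.
apply: lee_wpmul2r; first by apply: mule_ge0 => //; rewrite lee_fin invr_ge0 ltW.
by rewrite lee_fin.
Qed.

Lemma absln_gt0 (R : realType) (x : R) : 0 < x < 1 -> 0 < `|ln x|.
Proof. by move=> /ln_lt0 h; rewrite normr_gt0 lt_eqF. Qed.

Lemma near_lt (R : realType) (t : R) : 0 < t -> \forall e \near (0:R)^'+, e < t.
Proof. by move=> t0; apply/near_rightP; exists t => // e /andP []. Qed.

Lemma comp_right (R : realType) (h : R -> R) :
  (forall t, 0 < t -> \forall e \near (0:R)^'+, 0 < h e < t) ->
  forall V, (0:R)^'+ V -> (0:R)^'+ (h @^-1` V).
Proof.
move=> H V /near_rightP [t t0 Ht]; apply: filterS (H t t0) => e he.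
exact: Ht.
Qed.
Lemma zeta_small (R : realType) (zeta : R -> R) (rho k : R) :
  0 < rho -> 0 < k ->
  (forall t, 0 < t <= rho -> 0 < zeta t) ->
  (forall g, 0 < g -> \forall e \near (0:R)^'+, k - g < ln (zeta e) / ln e < k + g) ->
  forall t, 0 < t -> \forall e \near (0:R)^'+, 0 < zeta e < t.
Proof.
move=> r0 k0 Hpos Hq t t0.
have k2 : 0 < k / 2 by rewrite divr_gt0.
have Hq2 := Hq _ k2.
have e0 := nbhs_right_gt (0:R).
have er := @near_lt R rho r0.
have e1 := @near_lt R 1 ltr01.
have eM := @near_lt R _ (expR_gt0 (2 / k * ln t)).
apply: filterS (filterI e0 (filterI er (filterI e1 (filterI eM Hq2)))).
move=> e [ep [erh [e1h [eMh qh]]]].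
have zp : 0 < zeta e by apply: Hpos; rewrite ep /= ltW.
rewrite zp /=.
have L0 : ln e < 0 by apply: ln_lt0; rewrite ep.
have LM : ln e < 2 / k * ln t.
  by rewrite -ltr_expR lnK ?posrE.
have [qa _] := andP qh.
rewrite -(lnK (zp : zeta e \is Num.pos)) -(lnK (t0 : t \is Num.pos)) ltr_expR.
have Zq : ln (zeta e) = (ln (zeta e) / ln e) * ln e by rewrite divfK // lt_eqF.
move: qa LM Zq L0; set q := ln (zeta e) / ln e; set L := ln e; set Z := ln (zeta e).
have kM : k * (2 / k * ln t) = 2 * ln t.
  by rewrite mulrA mulrCA mulfV ?mulr1 // gt_eqF.
move: kM; set M := 2 / k * ln t => kM qa LM Zq L0.
rewrite Zq; nra.
Qed.
Lemma ratio1 (R : realType) (zeta : R -> R) (rho k : R) :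
  0 < rho -> 0 < k ->
  (forall t, 0 < t <= rho -> 0 < zeta t) ->
  (forall g, 0 < g -> \forall e \near (0:R)^'+, k - g < ln (zeta e) / ln e < k + g) ->
  forall c, k < c -> \forall e \near (0:R)^'+, `|ln (zeta e / 2)| / `|ln e| <= c.
Proof.
move=> r0 k0 Hpos Hq c kc.
have g0 : 0 < (c - k) / 2 by rewrite divr_gt0 // subr_gt0.
have Hqg := Hq _ g0.
have e0 := nbhs_right_gt (0:R).
have er := @near_lt R rho r0.
have e1 := @near_lt R 1 ltr01.
have eM := @near_lt R _ (expR_gt0 (- ln 2 / ((c - k) / 2))).
have z1 := @zeta_small R zeta rho k r0 k0 Hpos Hq 1 ltr01.
apply: filterS (filterI e0 (filterI er (filterI e1 (filterI eM (filterI Hqg z1))))).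
move=> e [ep [erh [e1h [eMh [qh zh]]]]].
have [zp zl1] := andP zh.
have L0 : ln e < 0 by apply: ln_lt0; rewrite ep.
have LM : ln e < - ln 2 / ((c - k) / 2).
  by rewrite -ltr_expR lnK ?posrE.
have [_ qb] := andP qh.
have Z2 : ln (zeta e / 2) = ln (zeta e) - ln 2.
  by rewrite lnM ?posrE ?invr_gt0 // lnV ?posrE.
have Z2n : ln (zeta e / 2) < 0.
  apply: ln_lt0; rewrite divr_gt0 //=; rewrite ltr_pdivrMr //; lra.
rewrite (ltr0_norm Z2n) (ltr0_norm L0) ler_pdivrMr ?oppr_gt0 // Z2.
have Zq : ln (zeta e) = (ln (zeta e) / ln e) * ln e by rewrite divfK // lt_eqF.
move: qb LM Zq L0; set q := ln (zeta e) / ln e; set L := ln e; set Z := ln (zeta e).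
set g := (c - k) / 2 => qb LM Zq L0.
have gL : g * L < - ln 2.
  by rewrite mulrC -ltr_pdivlMr.
have cE : c = k + 2 * g by rewrite /g; field.
rewrite Zq cE; nra.
Qed.

Lemma ratio2 (R : realType) (zeta : R -> R) (rho k : R) :
  0 < rho -> 0 < k ->
  (forall t, 0 < t <= rho -> 0 < zeta t) ->
  (forall g, 0 < g -> \forall e \near (0:R)^'+, k - g < ln (zeta e) / ln e < k + g) ->
  forall c, k^-1 < c -> \forall e \near (0:R)^'+, `|ln e| / `|ln (zeta e)| <= c.
Proof.
move=> r0 k0 Hpos Hq c kc.
have c0 : 0 < c by apply: lt_trans kc; rewrite invr_gt0.
have ci : c^-1 < k by rewrite -(invrK k) ltf_pV2 ?posrE ?invr_gt0.
have g0 : 0 < k - c^-1 by rewrite subr_gt0.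
have Hqg := Hq _ g0.
have e0 := nbhs_right_gt (0:R).
have e1 := @near_lt R 1 ltr01.
have z1 := @zeta_small R zeta rho k r0 k0 Hpos Hq 1 ltr01.
apply: filterS (filterI e0 (filterI e1 (filterI Hqg z1))).
move=> e [ep [e1h [qh zh]]].
have [zp zl1] := andP zh.
have L0 : ln e < 0 by apply: ln_lt0; rewrite ep.
have Z0 : ln (zeta e) < 0 by apply: ln_lt0; rewrite zp.
have [qa _] := andP qh.
rewrite (ltr0_norm Z0) (ltr0_norm L0) ler_pdivrMr ?oppr_gt0 //.
have Zq : ln (zeta e) = (ln (zeta e) / ln e) * ln e by rewrite divfK // lt_eqF.
have cc : c * c^-1 = 1 by rewrite mulfV // gt_eqF.
move: qa Zq L0 cc; set q := ln (zeta e) / ln e; set L := ln e; set Z := ln (zeta e).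
set ic := c^-1 => qa Zq L0 cc.
have cq : 1 < c * q.
  have qa' : ic < q by lra.
  nra.
move: cq; set m := c * q => cq.
rewrite Zq (_ : c * - (q * L) = m * - L); last by rewrite /m; ring.
nra.
Qed.
Lemma esup_ge0_near (R : realType) (T0 : choiceType) (T : filteredType T0)
  (F : set_system T) (FF : ProperFilter F) (f : T -> \bar R) :
  (\forall x \near F, (0 <= f x)%E) -> (0 <= limf_esup f F)%E.
Proof.
move=> H; rewrite -(@esup_cst0 R _ _ F FF); exact: esup_le_near.
Qed.

Lemma einf_ge0_near (R : realType) (T0 : choiceType) (T : filteredType T0)
  (F : set_system T) (FF : ProperFilter F) (f : T -> \bar R) :
  (\forall x \near F, (0 <= f x)%E) -> (0 <= limf_einf f F)%E.
Proof.
move=> H; rewrite -(@einf_cst0 R _ _ F FF); exact: einf_le_near.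
Qed.
Lemma core (R : realType) (zeta : R -> R) (rho k : R) (A B : R -> \bar R) :
  0 < rho -> 0 < k ->
  (forall t, 0 < t <= rho -> 0 < zeta t) ->
  (forall s t, s \in `[0, rho] -> t \in `[0, rho] -> s <= t -> zeta s <= zeta t) ->
  (forall d, 0 < d < zeta rho -> exists2 e, 0 < e < rho & zeta e = d) ->
  (forall g, 0 < g -> \forall e \near (0:R)^'+, k - g < ln (zeta e) / ln e < k + g) ->
  (forall d, 0 < d < zeta rho -> (0 <= B d)%E) ->
  (forall e, 0 < e < rho -> (B (zeta e) <= A e)%E) ->
  (forall e, 0 < e < rho -> (A e <= B (zeta e / 2)%R)%E) ->
  limf_esup (fun e : R => ((`|ln e|)^-1)%R%:E * A e)%E (0:R)^'+ =
    (k%:E * limf_esup (fun e : R => ((`|ln e|)^-1)%R%:E * B e)%E (0:R)^'+)%E /\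
  limf_einf (fun e : R => ((`|ln e|)^-1)%R%:E * A e)%E (0:R)^'+ =
    (k%:E * limf_einf (fun e : R => ((`|ln e|)^-1)%R%:E * B e)%E (0:R)^'+)%E.
Proof.
move=> r0 k0 Hpos Hmon Hivt Hq HB0 HBA HAB.
set phi := (fun e : R => ((`|ln e|)^-1)%R%:E * A e)%E.
set psi := (fun e : R => ((`|ln e|)^-1)%R%:E * B e)%E.
have zs := @zeta_small R zeta rho k r0 k0 Hpos Hq.
have R1 := @ratio1 R zeta rho k r0 k0 Hpos Hq.
have R2 := @ratio2 R zeta rho k r0 k0 Hpos Hq.
have e0 := nbhs_right_gt (0:R).
have er := @near_lt R rho r0.
have e1 := @near_lt R 1 ltr01.
have zr : 0 < zeta rho by apply: Hpos; rewrite r0 lexx.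
have rin : rho \in `[0, rho] by rewrite in_itv /= lexx ltW.
have : forall d, exists e, 0 < d < zeta rho -> 0 < e < rho /\ zeta e = d.
  move=> d; case: (pselect (0 < d < zeta rho)) => [H|H].
    by have [e ? ?] := Hivt d H; exists e.
  by exists 0.
move/choice => [h2 Hh2].
have hs : forall t, 0 < t -> exists2 u, 0 < u & forall d, 0 < d < u -> 0 < h2 d < t.
  move=> t t0; set t' := Num.min t rho.
  have t'0 : 0 < t' by rewrite lt_min t0 r0.
  have t'r : t' <= rho by rewrite ge_min lexx orbT.
  have t'in : t' \in `[0, rho] by rewrite in_itv /= t'r ltW.
  have zt' : 0 < zeta t' by apply: Hpos; rewrite t'0 t'r.
  exists (zeta t') => // d /andP [d0 dt].
  have dr : d < zeta rho by apply: (lt_le_trans dt); apply: Hmon.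
  have [/andP [h0 hr] hz] := Hh2 d (ltac:(by rewrite d0 dr)).
  rewrite h0 /=; apply: (@lt_le_trans _ _ t'); last by rewrite ge_min lexx.
  rewrite ltNge; apply/negP => Hle.
  have hin : h2 d \in `[0, rho] by rewrite in_itv /=; apply/andP; split; apply: ltW.
  have := Hmon _ _ t'in hin Hle.
  by rewrite hz leNgt dt.
have h2s : forall t, 0 < t -> \forall d \near (0:R)^'+, 0 < h2 d < t.
  move=> t t0; have [u u0 Hu] := hs t t0; apply/near_rightP; by exists u.
set h3 := fun d => h2 (2 * d).
have h3s : forall t, 0 < t -> \forall d \near (0:R)^'+, 0 < h3 d < t.
  move=> t t0; have [u u0 Hu] := hs t t0; apply/near_rightP.
  exists (u / 2); first by rewrite divr_gt0.
  move=> d /andP [d0 du]; apply: Hu; rewrite mulr_gt0 //=; rewrite ltr_pdivlMr // in du.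
  by rewrite mulrC.
have h1s : forall t, 0 < t -> \forall e \near (0:R)^'+, 0 < zeta e / 2 < t.
  move=> t t0; apply: filterS (filterI (zs t t0) (filterI e0 er)) => e [/andP [z0 zt] _].
  rewrite divr_gt0 //=; apply: le_lt_trans zt; rewrite ler_pdivrMr //; lra.
have A0 : \forall e \near (0:R)^'+, (0 <= A e)%E.
  apply: filterS (filterI (zs _ zr) (filterI e0 er)) => e [zh [ep erh]].
  apply: le_trans (HBA e _); last by rewrite ep.
  exact: HB0.
have phi0 : \forall e \near (0:R)^'+, (0 <= phi e)%E.
  apply: filterS A0 => e H; apply: mule_ge0 => //; by rewrite lee_fin invr_ge0.
have psi0 : \forall e \near (0:R)^'+, (0 <= psi e)%E.
  apply: filterS (filterI e0 (@near_lt R _ zr)) => e [ep ez]; apply: mule_ge0.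
    by rewrite lee_fin invr_ge0.
  by apply: HB0; rewrite ep.
have zm := zs _ (ltac:(by rewrite lt_min zr ltr01) : 0 < Num.min (zeta rho) 1).
have kinv : 0 < k^-1 by rewrite invr_gt0.
have U1 : (limf_esup phi (0:R)^'+ <= k%:E * limf_esup psi (0:R)^'+)%E.
  apply: le_mul_lim => //; first exact: esup_ge0_near psi0.
  move=> c kc.
  have c0 : 0 < c by apply: lt_trans kc.
  have Hpt : \forall e \near (0:R)^'+,
      (phi e <= c%:E * (psi \o (fun e => zeta e / 2)%R) e)%E.
    apply: filterS (filterI (R1 c kc) (filterI e0 (filterI er (filterI e1 zm)))).
    move=> e [rat [ep [erh [e1h /andP [z0]]]]]; rewrite lt_min => /andP [zr' z1].
    have d0 : 0 < zeta e / 2 by rewrite divr_gt0.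
    have dz : zeta e / 2 < zeta e by rewrite ltr_pdivrMr //; lra.
    rewrite /phi /psi /=; apply: chain_le => //.
    - by apply: absln_gt0; rewrite ep.
    - by apply: absln_gt0; rewrite d0 /=; lra.
    - by apply: HAB; rewrite ep.
    - by apply: HB0; rewrite d0 /=; lra.
  apply: (@le_trans _ _ (limf_esup (fun e => c%:E * (psi \o (fun e => zeta e / 2)%R) e)%E (0:R)^'+)).
    by apply: esup_le_near.
  rewrite esup_scale //.
  apply: lee_wpmul2l; first by rewrite lee_fin ltW.
  apply: (@esup_comp R R R _ _ (0:R)^'+ (0:R)^'+ (fun e => zeta e / 2)%R psi).
  exact: comp_right h1s.
have U2 : (limf_esup psi (0:R)^'+ <= k^-1%:E * limf_esup phi (0:R)^'+)%E.
  apply: le_mul_lim => //; first exact: esup_ge0_near phi0.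
  move=> c kc.
  have c0 : 0 < c := lt_trans kinv kc.
  have V2 := comp_right h2 h2s (R2 c kc).
  have Hpt : \forall d \near (0:R)^'+, (psi d <= c%:E * (phi \o h2) d)%E.
    apply: filterS (filterI V2 (filterI e0 (filterI (@near_lt R _ zr) (filterI e1 (h2s _ ltr01))))).
    move=> d [rat [dp [dzr [d1 /andP [h0 h1]]]]].
    have [/andP [_ hr] hz] := Hh2 d (ltac:(by rewrite dp dzr)).
    move: rat; rewrite /phi /psi /=; set e := h2 d in hz h0 h1 hr *.
    rewrite -hz => rat.
    have Ae : (B (zeta e) <= A e)%E by apply: HBA; rewrite h0.
    apply: chain_le => //.
    - by apply: absln_gt0; rewrite hz dp.
    - by apply: absln_gt0; rewrite h0.
    - by apply: le_trans Ae; apply: HB0; rewrite hz dp.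
  apply: (@le_trans _ _ (limf_esup (fun d => c%:E * (phi \o h2) d)%E (0:R)^'+)).
    by apply: esup_le_near.
  rewrite esup_scale //.
  apply: lee_wpmul2l; first by rewrite lee_fin ltW.
  apply: (@esup_comp R R R _ _ (0:R)^'+ (0:R)^'+ h2 phi).
  exact: comp_right h2s.
have L1 : (limf_einf phi (0:R)^'+ <= k%:E * limf_einf psi (0:R)^'+)%E.
  apply: le_mul_lim => //; first exact: einf_ge0_near psi0.
  move=> c kc.
  have c0 : 0 < c by apply: lt_trans kc.
  have V1 := comp_right h3 h3s (R1 c kc).
  have zr2 : 0 < zeta rho / 2 by rewrite divr_gt0.
  have Hpt : \forall d \near (0:R)^'+, ((phi \o h3) d <= c%:E * psi d)%E.
    apply: filterS (filterI V1 (filterI e0 (filterI (@near_lt R _ zr2) (filterI e1 (h3s _ ltr01))))).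
    move=> d [rat [dp [dzr [d1 /andP [h0 h1]]]]].
    have [/andP [_ hr] hz] := Hh2 (2 * d) (ltac:(by rewrite mulr_gt0 //=; rewrite ltr_pdivlMr // mulrC in dzr)).
    have hz2 : zeta (h3 d) / 2 = d by rewrite /h3 hz; field.
    move: rat; rewrite /phi /psi /= hz2 => rat.
    apply: chain_le => //.
    - by apply: absln_gt0; rewrite h0.
    - by apply: absln_gt0; rewrite dp.
    - by rewrite -{2}hz2; apply: HAB; rewrite h0.
    - apply: HB0; rewrite dp /=; apply: (lt_trans dzr); rewrite ltr_pdivrMr //; lra.
  apply: (@le_trans _ _ (limf_einf (phi \o h3) (0:R)^'+)).
    apply: (@einf_comp R R R _ _ (0:R)^'+ (0:R)^'+ h3 phi).
    exact: comp_right h3s.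
  apply: (@le_trans _ _ (limf_einf (fun d => c%:E * psi d)%E (0:R)^'+)).
    by apply: einf_le_near.
  by rewrite einf_scale.
have L2 : (limf_einf psi (0:R)^'+ <= k^-1%:E * limf_einf phi (0:R)^'+)%E.
  apply: le_mul_lim => //; first exact: einf_ge0_near phi0.
  move=> c kc.
  have c0 : 0 < c := lt_trans kinv kc.
  have Hpt : \forall e \near (0:R)^'+, ((psi \o zeta) e <= c%:E * phi e)%E.
    apply: filterS (filterI (R2 c kc) (filterI e0 (filterI er (filterI e1 zm)))).
    move=> e [rat [ep [erh [e1h /andP [z0]]]]]; rewrite lt_min => /andP [zr' z1].
    have Ae : (B (zeta e) <= A e)%E by apply: HBA; rewrite ep.
    rewrite /phi /psi /=; apply: chain_le => //.
    - by apply: absln_gt0; rewrite z0.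
    - by apply: absln_gt0; rewrite ep.
    - by apply: le_trans Ae; apply: HB0; rewrite z0.
  apply: (@le_trans _ _ (limf_einf (psi \o zeta) (0:R)^'+)).
    apply: (@einf_comp R R R _ _ (0:R)^'+ (0:R)^'+ zeta psi).
    exact: comp_right zs.
  apply: (@le_trans _ _ (limf_einf (fun d => c%:E * phi d)%E (0:R)^'+)).
    by apply: einf_le_near.
  by rewrite einf_scale.
have kk : (k%:E * k^-1%:E = 1)%E by rewrite -EFinM mulfV // gt_eqF.
split; apply/eqP; rewrite eq_le.
  rewrite U1 /=; apply: (le_trans (lee_wpmul2l _ U2)); first by rewrite lee_fin ltW.
  by rewrite muleA kk mul1e.
rewrite L1 /=; apply: (le_trans (lee_wpmul2l _ L2)); first by rewrite lee_fin ltW.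
by rewrite muleA kk mul1e.
Qed.
Lemma subadd_n (R : realType) (zeta : R -> R) (rho : R) :
  zeta 0 = 0 ->
  (forall s t, 0 <= s -> 0 <= t -> s + t <= rho -> zeta (s + t) <= zeta s + zeta t) ->
  forall (n : nat) t, 0 <= t -> n%:R * t <= rho -> zeta (n%:R * t) <= n%:R * zeta t.
Proof.
move=> z0 hs; elim=> [|n IH] t t0 hn; first by rewrite !mul0r z0.
rewrite -natr1 !mulrDl !mul1r.
have h1 : 0 <= n%:R * t by rewrite mulr_ge0.
have hn' : n%:R * t + t <= rho by move: hn; rewrite -natr1 mulrDl mul1r.
apply: (le_trans (hs _ _ h1 t0 hn')).
rewrite lerD2r; apply: IH => //; apply: le_trans hn.
by rewrite ler_wpM2r // ler_nat.
Qed.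

Lemma lin_lower (R : realType) (zeta : R -> R) (rho : R) :
  0 < rho -> zeta 0 = 0 ->
  (forall s t, s \in `[0, rho] -> t \in `[0, rho] -> s <= t -> zeta s <= zeta t) ->
  (forall s t, 0 <= s -> 0 <= t -> s + t <= rho -> zeta (s + t) <= zeta s + zeta t) ->
  forall e, 0 < e <= rho / 2 -> zeta (rho / 2) / rho * e <= zeta e.
Proof.
move=> r0 z0 hm hs e /andP [e0 er].
have x0 : 0 <= rho / e by rewrite divr_ge0 // ltW.
have /andP [tl tu] := truncn_itv x0.
set n := Num.trunc (rho / e) in tl tu.
have ne : n%:R * e <= rho by rewrite -ler_pdivlMr.
have ne2 : rho / 2 <= n%:R * e.
  rewrite ltr_pdivrMr // -natr1 in tu; lra.
have h1 := @subadd_n R zeta rho z0 hs n e (ltW e0) ne.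
have h2 : zeta (rho / 2) <= zeta (n%:R * e).
  apply: hm => //; rewrite in_itv /=.
  - by rewrite divr_ge0 ?(ltW r0) //= ler_pdivrMr //; lra.
  - by rewrite ne mulr_ge0 // ltW.
have ze : 0 <= zeta e.
  rewrite -z0; apply: hm; rewrite ?in_itv /= ?lexx ?(ltW r0) ?(ltW e0) //.
  by apply: (le_trans er); rewrite ler_pdivrMr //; lra.
have key : zeta (rho / 2) * e <= zeta e * rho.
  apply: (le_trans (ler_wpM2r (ltW e0) (le_trans h2 h1))).
  by rewrite mulrAC mulrC ler_wpM2l.
by rewrite mulrAC ler_pdivrMr.
Qed.
Lemma esup_le_cst (R : realType) (T0 : choiceType) (T : filteredType T0)
  (F : set_system T) (FF : Filter F) (f : T -> \bar R) (a : \bar R) :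
  (\forall x \near F, (f x <= a)%E) -> (limf_esup f F <= a)%E.
Proof.
move=> H; rewrite limf_esupE; apply: ge_ereal_inf.
exists (ereal_sup (f @` [set x | (f x <= a)%E])); first by exists [set x | (f x <= a)%E].
by apply: ge_ereal_sup => _ [x Hx <-].
Qed.

Theorem mainTheorem15 (R : realType) (G : groupType) (X : topologicalType)
    (act : G -> X -> X) (d : X -> X -> R) (zeta : R -> R)
    (F : nat -> seq G) :
  countable_group G ->
  continuous_action act ->
  compact [set: X] ->
  metric_inducing d ->
  folner R F ->
  classA (diameter d) zeta ->
  k_m zeta = k_M zeta ->
  (0 < k_M zeta)%E ->
  mdimM_upper act F d = (k_M zeta * mdimM_upper act F (fun x y => zeta (d x y)))%E /\
  mdimM_lower act F d = (k_M zeta * mdimM_lower act F (fun x y => zeta (d x y)))%E.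
Proof.
move=> _ ha hk hm _ hA hkm hkM.
have [M HM] := d_bounded ha hk hm.
have hm' := hm; case: hm' => hp hz hs ht _.
case: (pselect (exists x y : X, x <> y)) => [[x0 [y0 nxy]] | nsub]; last first.
  have sub : forall x y : X, x = y.
    by move=> x y; apply: contrapT => H; apply: nsub; exists x, y.
  have E : forall rho : X -> X -> R,
      (fun e : R => ((`|ln e|)^-1)%:E * mdim_level act F rho e)%E = (fun _ => 0%E).
    by move=> rho; apply: funext => e; rewrite level_sub // mule0.
  by rewrite /mdimM_upper /mdimM_lower !E esup_cst0 einf_cst0 mule0.
set rho := diameter d.
have hsup : has_sup [set r | exists x y, r = d x y].
  split; first by exists (d x0 y0), x0, y0.
  by exists M => _ [x [y ->]].
have hd : forall a b, 0 <= d a b <= rho.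
  move=> a b; rewrite hp /=; apply: (sup_upper_bound hsup); by exists a, b.
have dxy : 0 < d x0 y0.
  rewrite lt_def hp andbT; apply/eqP => /hz; exact: nxy.
have r0 : 0 < rho by apply: (lt_le_trans dxy); have /andP [] := hd x0 y0.
case: hA => hcont hmon hsubadd hnn hzero.
have zin : (0:R) \in `[0, rho] by rewrite in_itv /= lexx ltW.
have z0 : zeta 0 = 0 := proj2 (hzero 0 zin) erefl.
have Hpos : forall t, 0 < t <= rho -> 0 < zeta t.
  move=> t /andP [t0 tr]; have tin : t \in `[0, rho] by rewrite in_itv /= tr ltW.
  rewrite lt_def hnn // andbT; apply/eqP => /(hzero _ tin) => t00.
  by move: t0; rewrite t00 ltxx.
have zr : 0 < zeta rho by apply: Hpos; rewrite r0 lexx.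
have Hivt : forall dd, 0 < dd < zeta rho -> exists2 e, 0 < e < rho & zeta e = dd.
  move=> dd /andP [d0 dr].
  have [c cin zc] := @IVT R zeta 0 rho dd (ltW r0) hcont
    (ltac:(by rewrite z0 ge_min le_max (ltW d0) (ltW dr) !orbT)).
  exists c => //; move: cin; rewrite in_itv /= => /andP [c0 cr].
  rewrite !lt_def c0 cr andbT andbT; apply/andP; split.
    by apply/eqP => c00; move: zc; rewrite c00 z0 => dd0; move: d0; rewrite -dd0 ltxx.
  by apply/eqP => crr; move: zc; rewrite -crr => dd0; move: dr; rewrite dd0 ltxx.
have r2 : 0 < rho / 2 by rewrite divr_gt0.
have [cc cc0 Hlin] : exists2 c, 0 < c & forall e, 0 < e <= rho / 2 -> c * e <= zeta e.
  exists (zeta (rho / 2) / rho); last exact: lin_lower r0 z0 hmon hsubadd.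
  rewrite divr_gt0 // Hpos // r2 /= ler_pdivrMr //; lra.
set q := fun e : R => ((ln (zeta e) / ln e)%:E : \bar R).
have kfin : (k_M zeta <= 2%:E)%E.
  rewrite /k_M; apply: (@esup_le_cst R R R _ _ q).
  have e0 := nbhs_right_gt (0:R).
  apply: filterS (filterI e0 (filterI (@near_lt R _ r2) (filterI (@near_lt R _ cc0) (@near_lt R 1 ltr01)))).
  move=> e [ep [er [ec e1]]]; rewrite /q lee_fin.
  have L0 : ln e < 0 by apply: ln_lt0; rewrite ep.
  rewrite ler_ndivrMr //.
  have ee : e * e <= zeta e.
    apply: le_trans (Hlin e _); last by rewrite ep ltW.
    by rewrite ler_wpM2r // ltW.
  have : ln (e * e) <= ln (zeta e).
    rewrite ler_ln ?posrE ?mulr_gt0 //; apply: lt_le_trans ee; exact: mulr_gt0.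
  rewrite lnM ?posrE //; lra.
have kE : k_M zeta = (fine (k_M zeta))%:E.
  rewrite fineK // ge0_fin_numE ?(ltW hkM) //; exact: (le_lt_trans kfin (ltey _)).
set k := fine (k_M zeta) in kE.
have k0 : 0 < k by rewrite -lte_fin -kE.
have Hq : forall g, 0 < g -> \forall e \near (0:R)^'+, k - g < ln (zeta e) / ln e < k + g.
  move=> g g0.
  have h1 : \forall e \near (0:R)^'+, (q e < (k + g)%:E)%E.
    apply: (@esup_lt_near R R R _ _ q); rewrite -/(k_M zeta) kE lte_fin; lra.
  have h2 : \forall e \near (0:R)^'+, ((k - g)%:E < q e)%E.
    apply: (@einf_gt_near R R R _ _ q); rewrite -/(k_m zeta) hkm kE lte_fin; lra.
  apply: filterS (filterI h1 h2) => e [a b]; rewrite /q !lte_fin in a b.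
  by rewrite a b.
set zd := fun x y => zeta (d x y).
have dB : forall n e, 0 < e ->
    exists N : nat, forall s, Defs.separated act d (F n) e s -> (size s <= N)%N.
  by move=> n e e0; exact: sep_bound (F n) e ha hk hm e0.
have zA : forall n e s, 0 < e < rho -> Defs.separated act zd (F n) (zeta e) s ->
    Defs.separated act d (F n) e s.
  move=> n e s /andP [e0 er] Hs.
  apply: (@sep_zeta_a R G X act d zeta rho e (F n) s hd hmon) => //.
    by rewrite !ltW.
  by apply: hnn; rewrite in_itv /= !ltW.
have zBe : forall n e, 0 < e < rho ->
    exists N : nat, forall s, Defs.separated act zd (F n) (zeta e) s -> (size s <= N)%N.
  move=> n e /andP [e0 er]; have [N HN] := dB n e e0; exists N => s Hs.
  by apply: HN; apply: zA => //; rewrite e0.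
have zB : forall n dd, 0 < dd < zeta rho ->
    exists N : nat, forall s, Defs.separated act zd (F n) dd s -> (size s <= N)%N.
  by move=> n dd hdd; have [e he <-] := Hivt dd hdd; exact: zBe.
have HB0 : forall dd, 0 < dd < zeta rho -> (0 <= mdim_level act F zd dd)%E.
  by move=> dd hdd; exact: (@level_ge0 R G X act F zd dd x0 (fun n => zB n dd hdd)).
have HBA : forall e, 0 < e < rho -> (mdim_level act F zd (zeta e) <= mdim_level act F d e)%E.
  move=> e he; have [e0 er] := andP he.
  exact: (@level_le R G X act F zd d (zeta e) e x0 (fun n => zBe n e he)
    (fun n => dB n e e0) (fun n s => zA n e s he)).
have HAB : forall e, 0 < e < rho -> (mdim_level act F d e <= mdim_level act F zd (zeta e / 2)%R)%E.
  move=> e he; have [e0 er] := andP he.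
  have ze : 0 < zeta e by apply: Hpos; rewrite e0 ltW.
  have zle : zeta e <= zeta rho by apply: hmon; rewrite ?in_itv /= ?lexx ?(ltW r0) ?(ltW e0) ?(ltW er).
  have h2 : 0 < zeta e / 2 < zeta rho.
    rewrite divr_gt0 //=; apply: lt_le_trans zle; rewrite ltr_pdivrMr //; lra.
  apply: (@level_le R G X act F d zd e (zeta e / 2) x0 (fun n => dB n e e0)
    (fun n => zB n _ h2)).
  move=> n s Hs.
  apply: (@sep_zeta_b R G X act d zeta rho e (F n) s hd hmon) => //.
  by rewrite !ltW.
have [U L] := @core R zeta rho k (mdim_level act F d) (mdim_level act F zd)
  r0 k0 Hpos hmon Hivt Hq HB0 HBA HAB.
by rewrite /mdimM_upper /mdimM_lower kE; split.
Qed.
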